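(* Let $f$ satisfy conditions (1) and (2b), let $p>0$ and $\zeta>1$. In the expression \[ \int_0^\infty(1-2s)\,e^{-\zeta s}\sum_{n=0}^\infty c_{2n}\,p^n\sum_{k=0}^n(-1)^{n-k}\frac{(\zeta-1)^k}{(n-k)!\,(k!)^2}\,s^k\,ds \] the order of summation and integration may be reversed, for arbitrary values of $p$.
   Context: $f:[0,\infty)\to\mathbb{R}$; $c_n=2\pi\int_0^\infty f(r)\,r^{n+1}dr$. Condition (1): there is a constant $F$ with $0\le f(r)\le F$ for all $r\ge0$, $c_0$ exists and $c_0>0$. Condition (2b): $c_{2n}$ exists for all $n\in\mathbb{N}_0$ and $c_n^{1/n}=o(n^{1/2})$ as $n\to\infty$. (In the paper $\zeta=p/p'+1$ with $0<p'<p$.) *)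

(* Defs.v *)
From HB Require Import structures.
From mathcomp Require Import all_boot all_order all_algebra.
From mathcomp Require Import all_classical all_reals all_analysis.
Set Implicit Arguments. Unset Strict Implicit. Unset Printing Implicit Defensive.
Import Order.TTheory GRing.Theory Num.Theory.
Import numFieldNormedType.Exports.
Local Open Scope classical_set_scope.
Local Open Scope ring_scope.

Definition halfline (R : realType) : set R := `[0%R, +oo[%classic.
Arguments halfline R : clear implicits.

Definition cn (R : realType) (f : R -> R) (n : nat) : R :=
  2 * pi * Rintegral (@lebesgue_measure R) (halfline R) (fun r => f r * r ^+ n.+1).

Definition cn_exists (R : realType) (f : R -> R) (n : nat) : Prop :=
  (@lebesgue_measure R).-integrable (halfline R) (fun r => (f r * r ^+ n.+1)%:E).

Definition cond1 (R : realType) (f : R -> R) : Prop :=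
  (exists F : R, forall r : R, 0 <= r -> 0 <= f r <= F) /\
  cn_exists f 0 /\ 0 < cn f 0.

Definition cond2b (R : realType) (f : R -> R) : Prop :=
  (forall n : nat, cn_exists f (2 * n)%N) /\
  (forall eps : R, 0 < eps ->
     \forall n \near \oo, powR (cn f n) (n%:R)^-1 <= eps * Num.sqrt (n%:R)).

Definition term (R : realType) (f : R -> R) (p zeta : R) (n : nat) (s : R) : R :=
  (1 - 2 * s) * expR (- (zeta * s)) *
  (cn f (2 * n)%N * p ^+ n *
   \sum_(0 <= k < n.+1)
      ((-1) ^+ (n - k) * (zeta - 1) ^+ k /
         ((n - k)`!%:R * (k`!%:R) ^+ 2) * s ^+ k)).

(* Main.v *)
Require Import Defs.
From HB Require Import structures.
From mathcomp Require Import all_boot all_order all_algebra.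
From mathcomp Require Import all_classical all_reals all_analysis.
From mathcomp Require Import ring lra zify measurable_realfun.
Import Order.TTheory GRing.Theory Num.Theory.
Import numFieldNormedType.Exports.
Local Open Scope classical_set_scope.
Local Open Scope ring_scope.

Lemma bin_le2 n k : ('C(n, k) <= 2 ^ n)%N.
Proof.
elim: n k => [|n IH] [|k] //=.
  by rewrite bin0 expn_gt0.
by rewrite binS expnS mul2n -addnn leq_add.
Qed.

Lemma sq_le_4pow n : (n.+1 ^ 2 <= 4 ^ n)%N.
Proof.
elim: n => // n IH; rewrite expnS; move: IH; rewrite -!mulnn => IH.
apply: (@leq_trans (4 * (n.+1 * n.+1))); first nia.
by rewrite [in X in (_ <= X)%N]expnS leq_mul2l.
Qed.

Section helpers.
Variable R : realType.

Lemma pow_le_factexp (x : R) j : 0 <= x -> x ^+ j <= j`!%:R * expR x.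
Proof.
move=> x0; case: j => [|j].
  by rewrite expr0 fact0 mul1r; apply: le_trans (expR_ge1Dx x); lra.
have := expR_ge1Dxn j x0.
have f0 : 0 < (j.+1)`!%:R :> R by rewrite ltr0n fact_gt0.
rewrite -ler_pdivrMl// mulrC => h; apply: le_trans h; lra.
Qed.

Lemma fact_le2 n k : (k <= n)%N ->
  n`!%:R <= 2 ^+ n * ((n - k)`!%:R * k`!%:R) :> R.
Proof.
move=> kn; rewrite -(bin_fact kn) -natrX -!natrM ler_nat mulnC [(_ * k`!)%N]mulnC.
by rewrite mulnC leq_mul2r bin_le2 orbT.
Qed.

Lemma nn_fact (n : nat) : (n%:R : R) ^+ n <= n`!%:R * expR 1 ^+ n.
Proof.
by rewrite -expRM_natl mulr1; apply: pow_le_factexp.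
Qed.

Lemma cn_ge0 (f : R -> R) m : (forall r, 0 <= r -> 0 <= f r) -> 0 <= cn f m.
Proof.
move=> f0; rewrite /cn; apply: mulr_ge0; first by apply: mulr_ge0 => //; exact: pi_ge0.
apply: Rintegral_ge0 => r; rewrite /halfline /= in_itv /= andbT => r0.
by apply: mulr_ge0; [exact: f0|exact: exprn_ge0].
Qed.

End helpers.

Lemma c_bound (R : realType) (f : R -> R) (eps : R) :
  cond2b f -> (forall r, 0 <= r -> 0 <= f r) -> 0 < eps ->
  exists N, forall n, (N < n)%N -> cn f (2 * n) <= (eps ^+ 2 * (2 * n)%:R) ^+ n.
Proof.
move=> [_ H] f0 e0.
have [N _ HN] := H eps e0.
exists N => n Nn.
have m0 : (0 < 2 * n)%N by rewrite muln_gt0 /= (leq_ltn_trans _ Nn).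
have /= := HN (2 * n)%N (leq_trans (ltnW Nn) (@leq_pmull n 2 isT)).
set m := (2 * n)%N => hP.
have c0 := @cn_ge0 R f m f0.
have -> : cn f m = (powR (cn f m) (m%:R)^-1) ^+ m.
  rewrite -powR_mulrn ?powR_ge0// -powRrM mulVf ?powRr1//.
  by rewrite pnatr_eq0 -lt0n.
apply: le_trans (lerXn2r _ _ _ hP) _.
- by rewrite nnegrE powR_ge0.
- by rewrite nnegrE (mulr_ge0 (ltW e0) (sqrtr_ge0 _)).
have -> : (eps ^+ 2 * (2 * n)%:R) = (eps * Num.sqrt (2 * n)%:R) ^+ 2.
  by rewrite exprMn sqr_sqrtr ?ler0n.
by rewrite -exprM.
Qed.

Lemma summable_D (R : realType) (f : R -> R) (Y : R) :
  cond2b f -> (forall r, 0 <= r -> 0 <= f r) -> 0 <= Y ->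
  cvgn (series (fun n => (n.+1%:R) ^+ 2 * cn f (2 * n) * Y ^+ n / n`!%:R)).
Proof.
move=> c2 f0 Y0.
set u := fun n => _.
have fn0 n : 0 < n`!%:R :> R by rewrite ltr0n fact_gt0.
have u0 n : 0 <= u n.
  rewrite /u; apply: divr_ge0; last exact: ltW.
  by rewrite mulr_ge0 ?exprn_ge0// mulr_ge0 ?sqr_ge0 ?cn_ge0.
pose E := expR 1 : R.
have E1 : 1 <= E by apply: le_trans (expR_ge1Dx 1); lra.
pose t := 16 * E * (1 + Y).
have t16 : 16 <= t by rewrite /t; nra.
pose eps := t^-1.
have e0 : 0 < eps by rewrite /eps invr_gt0; lra.
have et : eps * t = 1 by rewrite /eps mulVf//; lra.
have e1 : eps <= 1 by rewrite /eps invf_le1; lra.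
have [N HN] := @c_bound R f eps c2 f0 e0.
have key n : (N < n)%N -> u n <= (2^-1) ^+ n.
  move=> Nn; have hc := HN n Nn; have hnn := @nn_fact R n.
  have h1 : u n <= ((n.+1%:R) ^+ 2 * Y ^+ n / n`!%:R) *
                   ((2 * eps ^+ 2) ^+ n * (n`!%:R * E ^+ n)).
    have -> : u n = ((n.+1%:R) ^+ 2 * Y ^+ n / n`!%:R) * cn f (2 * n).
      by rewrite /u; field; rewrite gt_eqF.
    apply: ler_wpM2l; first by rewrite divr_ge0 ?mulr_ge0 ?sqr_ge0 ?exprn_ge0// ltW.
    apply: (le_trans hc); rewrite natrM exprMn mulrA -exprMn.
    have -> : eps ^+ 2 * (2 * n%:R) = (2 * eps ^+ 2) * n%:R by ring.
    rewrite exprMn -mulrA; apply: ler_wpM2l => //.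
    by rewrite exprn_ge0// mulr_ge0// sqr_ge0.
  apply: (le_trans h1).
  have -> : (n.+1%:R) ^+ 2 * Y ^+ n / n`!%:R * ((2 * eps ^+ 2) ^+ n * (n`!%:R * E ^+ n))
      = (n.+1%:R) ^+ 2 * (2 * eps ^+ 2 * E * Y) ^+ n :> R.
    by rewrite !exprMn; field; rewrite gt_eqF.
  have h4 : (n.+1%:R) ^+ 2 <= 4 ^+ n :> R.
    by rewrite -natrX -(natrX _ 4) ler_nat sq_le_4pow.
  have g0 : 0 <= 2 * eps ^+ 2 * E * Y.
    by rewrite mulr_ge0// mulr_ge0 ?mulr_ge0 ?sqr_ge0//; lra.
  apply: (le_trans (ler_wpM2r (exprn_ge0 _ g0) h4)).
  have h8 : 8 * eps ^+ 2 * E * Y <= 2^-1.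
    have h9 : eps * (eps * t) / 2 = 8 * eps ^+ 2 * E * Y + 8 * eps ^+ 2 * E.
      by rewrite /t; field.
    rewrite et mulr1 in h9.
    have : 0 <= 8 * eps ^+ 2 * E by rewrite !mulr_ge0 ?sqr_ge0//; lra.
    lra.
  rewrite -exprMn; apply: lerXn2r; rewrite ?nnegrE.
  - by rewrite mulr_ge0.
  - lra.
  apply: le_trans h8; rewrite le_eqVlt; apply/orP; left; apply/eqP; ring.
pose K := \sum_(i < N.+1) u i * 2 ^+ i + 1.
have K1 : 1 <= K by rewrite /K lerDr sumr_ge0// => i _; rewrite mulr_ge0 ?exprn_ge0.
have uK n : u n <= geometric K (2^-1) n.
  rewrite /geometric /=.
  have [nN|Nn] := leqP n N.
    have -> : u n = (u n * 2 ^+ n) * (2^-1) ^+ n.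
      by rewrite -mulrA -exprMn mulfV ?expr1n ?mulr1.
    apply: ler_wpM2r; first by rewrite exprn_ge0.
    rewrite /K (bigD1 (Ordinal (nN : (n < N.+1)%N)))//= -addrA lerDl.
    by rewrite addr_ge0// sumr_ge0// => i _; rewrite mulr_ge0 ?exprn_ge0.
  apply: (le_trans (key n Nn)); rewrite ler_peMl ?exprn_ge0//.
apply: (series_le_cvg u0 _ uK).
  by move=> n; rewrite /geometric /= mulr_ge0 ?exprn_ge0//; lra.
apply: is_cvg_geometric_series; rewrite ger0_norm; lra.
Qed.

Lemma perk_bound (R : realType) (zeta s : R) n k : 1 < zeta -> 0 <= s -> (k <= n)%N ->
  (1 + 2 * s) * expR (- (zeta * s)) *
  `|(-1) ^+ (n - k) * (zeta - 1) ^+ k / ((n - k)`!%:R * (k`!%:R) ^+ 2) * s ^+ k|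
  <= 3 * (n.+1)%:R * (2 * zeta) ^+ n / n`!%:R * expR (- ((zeta - 1) * s)).
Proof.
move=> z1 s0 kn.
set a := zeta - 1.
have a0 : 0 <= a by rewrite /a; lra.
set F := k`!%:R : R. set G := (n - k)`!%:R : R. set Nf := n`!%:R : R.
have F0 : 0 < F by rewrite /F ltr0n fact_gt0.
have G0 : 0 < G by rewrite /G ltr0n fact_gt0.
have N0 : 0 < Nf by rewrite /Nf ltr0n fact_gt0.
set x := s ^+ k. set ex := expR s. set em := expR (- s). set ea := expR (- (a * s)).
have x0 : 0 <= x by rewrite exprn_ge0.
have ex0 : 0 <= ex by rewrite expR_ge0.
have em0 : 0 <= em by rewrite expR_ge0.
have ea0 : 0 <= ea by rewrite expR_ge0.
have emex : em * ex = 1 by rewrite /em /ex expRN mulVf// gt_eqF ?expR_gt0.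
have hz : expR (- (zeta * s)) = em * ea.
  by rewrite /em /ea -expRD; congr expR; rewrite /a; ring.
have hx1 : x <= F * ex by exact: pow_le_factexp.
have hx2 : s * x <= (k.+1)%:R * (F * ex).
  by rewrite /x -exprS mulrA -natrM -factS; exact: pow_le_factexp.
have hk : (k.+1)%:R <= (n.+1)%:R :> R by rewrite ler_nat.
have hx : x + 2 * (s * x) <= F * ex * (3 * (n.+1)%:R).
  have P0 : 0 <= F * ex by rewrite mulr_ge0// ltW.
  have h1 : (k.+1)%:R * (F * ex) <= (n.+1)%:R * (F * ex) by apply: ler_wpM2r.
  have h2 : F * ex <= (n.+1)%:R * (F * ex) by rewrite ler_peMl// ler1n.
  lra.
have ha : a ^+ k * Nf <= (2 * zeta) ^+ n * (G * F).
  have -> : (2 * zeta) ^+ n * (G * F) = zeta ^+ n * (2 ^+ n * (G * F)).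
    by rewrite exprMn; ring.
  apply: ler_pM.
  - exact: exprn_ge0.
  - exact: ltW.
  - apply: (@le_trans _ _ (zeta ^+ k)).
      by apply: lerXn2r; rewrite ?nnegrE//; [lra|rewrite /a; lra].
    by rewrite (ler_eXn2l z1).
  - exact: fact_le2.
have -> : (-1) ^+ (n - k) * a ^+ k / (G * F ^+ 2) * x
    = (-1) ^+ (n - k) * (a ^+ k / (G * F ^+ 2) * x) by ring.
rewrite normrM normrX normrN1 expr1n mul1r ger0_norm; last first.
  by rewrite mulr_ge0// divr_ge0 ?exprn_ge0// mulr_ge0 ?exprn_ge0// ltW.
rewrite hz.
have -> : (1 + 2 * s) * (em * ea) * (a ^+ k / (G * F ^+ 2) * x)
    = ea * em * (a ^+ k / (G * F ^+ 2)) * (x + 2 * (s * x)) by ring.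
apply: (@le_trans _ _ (ea * em * (a ^+ k / (G * F ^+ 2)) * (F * ex * (3 * (n.+1)%:R)))).
  apply: ler_wpM2l => //.
  have A0 : 0 <= a ^+ k / (G * F ^+ 2).
    by rewrite divr_ge0 ?exprn_ge0// mulr_ge0 ?exprn_ge0// ltW.
  by apply: mulr_ge0 => //; apply: mulr_ge0.
have -> : ea * em * (a ^+ k / (G * F ^+ 2)) * (F * ex * (3 * (n.+1)%:R))
    = (ea * (3 * (n.+1)%:R)) * (em * ex) * (a ^+ k / (G * F)).
  by field; rewrite !gt_eqF.
rewrite emex mulr1.
have -> : 3 * (n.+1)%:R * (2 * zeta) ^+ n / Nf * ea
    = (ea * (3 * (n.+1)%:R)) * ((2 * zeta) ^+ n / Nf) by ring.
apply: ler_wpM2l; first by rewrite mulr_ge0// mulr_ge0// ler0n.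
rewrite ler_pdivrMr ?mulr_gt0// mulrAC ler_pdivlMr//.
Qed.

Lemma term_bound (R : realType) (f : R -> R) (p zeta : R) n s :
  (forall r, 0 <= r -> 0 <= f r) -> 0 < p -> 1 < zeta -> 0 <= s ->
  `|term f p zeta n s| <=
  3 * ((n.+1%:R) ^+ 2 * cn f (2 * n) * (2 * p * zeta) ^+ n / n`!%:R) *
  expR (- ((zeta - 1) * s)).
Proof.
move=> f0 p0 z1 s0; rewrite /term.
set S := \sum_(0 <= k < n.+1) _.
set C := cn f (2 * n).
have C0 : 0 <= C by exact: cn_ge0.
set e := expR (- (zeta * s)).
have e0 : 0 <= e by rewrite expR_ge0.
set B := 3 * (n.+1)%:R * (2 * zeta) ^+ n / n`!%:R * expR (- ((zeta - 1) * s)).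
have hS : (1 + 2 * s) * e * `|S| <= (n.+1)%:R * B.
  apply: (@le_trans _ _ (\sum_(0 <= k < n.+1) (1 + 2 * s) * e *
     `|(-1) ^+ (n - k) * (zeta - 1) ^+ k / ((n - k)`!%:R * (k`!%:R) ^+ 2) * s ^+ k|)).
    rewrite -mulr_sumr; apply: ler_wpM2l; first by rewrite mulr_ge0//; lra.
    exact: ler_norm_sum.
  rewrite [X in _ <= X]mulr_natl -[in X in _ <= X](subn0 n.+1) -sumr_const_nat.
  apply: ler_sum_nat => k /andP[_ kn]; exact: perk_bound.
have Cp0 : 0 <= C * p ^+ n by rewrite mulr_ge0// exprn_ge0// ltW.
rewrite normrM normrM (ger0_norm e0) normrM (ger0_norm Cp0).
apply: (@le_trans _ _ (C * p ^+ n * ((1 + 2 * s) * e * `|S|))).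
  rewrite [X in X <= _](_ : _ = C * p ^+ n * (`|1 - 2 * s| * e * `|S|)); last by ring.
  apply: ler_wpM2l => //; apply: ler_wpM2r => //; apply: ler_wpM2r => //.
  by rewrite ler_norml; apply/andP; split; lra.
apply: (le_trans (ler_wpM2l Cp0 hS)).
by rewrite /B !exprMn le_eqVlt; apply/orP; left; apply/eqP; ring.
Qed.

Lemma term_meas (R : realType) (f : R -> R) (p zeta : R) n (D : set R) :
  measurable_fun D (term f p zeta n).
Proof.
rewrite /term.
apply: measurable_funM; first apply: measurable_funM.
- apply: measurable_funB; first exact: measurable_cst.
  by apply: measurable_funM; [exact: measurable_cst|exact: measurable_id].
- apply: measurableT_comp; first exact: measurable_expR.
  apply: measurable_funN.
  by apply: measurable_funM; [exact: measurable_cst|exact: measurable_id].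
- apply: measurable_funM; first exact: measurable_cst.
  apply: measurable_sum => k.
  apply: measurable_funM; first exact: measurable_cst.
  exact: exprn_measurable.
Qed.

Lemma halfline_meas (R : realType) : measurable (halfline R).
Proof. exact: measurable_itv. Qed.

Lemma exp_integrable (R : realType) (a : R) : 0 < a ->
  (@lebesgue_measure R).-integrable (halfline R) (fun s => (expR (- (a * s)))%:E).
Proof.
move=> a0.
have i1 : (@lebesgue_measure R).-integrable (setT : set R) (EFin \o exponential_pdf a).
  apply/integrableP; split.
    by apply/measurable_EFinP; exact: measurable_exponential_pdf.
  have h : (fun x => `|(EFin \o exponential_pdf a) x|)%E = (fun x => (exponential_pdf a x)%:E).
    apply/funext => x; change (`|(exponential_pdf a x)%:E| = (exponential_pdf a x)%:E)%E.
    by rewrite abse_EFin ger0_norm//; apply: exponential_pdf_ge0; exact: ltW.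
  rewrite h.
  by rewrite integral_exponential_pdf// ltry.
have i2 : (@lebesgue_measure R).-integrable (halfline R) (EFin \o exponential_pdf a).
  by apply: (integrableS _ _ _ i1) => //; exact: measurable_itv.
have i3 : (@lebesgue_measure R).-integrable (halfline R)
    (fun x => (a^-1)%:E * (EFin \o exponential_pdf a) x)%E.
  by apply: integrableZl => //; exact: measurable_itv.
apply: (eq_integrable _ _ _ _ i3); first exact: measurable_itv.
move=> x; rewrite inE /halfline /= in_itv /= andbT => x0.
by rewrite /= exponential_pdfE// -EFinM mulrA mulVf ?gt_eqF// mul1r mulNr.
Qed.

Theorem lemma9 (R : realType) (f : R -> R) (p zeta : R) :
  cond1 f -> cond2b f -> 0 < p -> 1 < zeta ->
  (* the inner series converges for every s >= 0 *)
  (forall s : R, 0 <= s -> cvgn (series (fun n => term f p zeta n s))) /\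
  (* the integrand (sum of the series) is integrable on [0, oo[ *)
  (@lebesgue_measure R).-integrable (halfline R)
     (fun s => (limn (series (fun n => term f p zeta n s)))%:E) /\
  (* every summand is integrable on [0, oo[ *)
  (forall n : nat, (@lebesgue_measure R).-integrable (halfline R)
     (fun s => (term f p zeta n s)%:E)) /\
  (* summing the termwise integrals gives the integral of the sum *)
  series (fun n => Rintegral (@lebesgue_measure R) (halfline R) (term f p zeta n))
    @ \oo --> Rintegral (@lebesgue_measure R) (halfline R)
                (fun s => limn (series (fun n => term f p zeta n s))).
Proof.
move=> [[F hF] _] c2 p0 z1.
have f0 : forall r, 0 <= r -> 0 <= f r by move=> r r0; case/andP: (hF r r0).
have a0 : 0 < zeta - 1 by lra.
pose D n := 3 * ((n.+1%:R) ^+ 2 * cn f (2 * n) * (2 * p * zeta) ^+ n / n`!%:R).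
have cD : cvgn (series D).
  have := is_cvg_seriesZ (k:=3) (@summable_D R f (2 * p * zeta) c2 f0 ltac:(rewrite !mulr_ge0//; lra)).
  congr (cvgn (series _)); apply/funext => n; rewrite /D scalrfctE.
have D0 n : 0 <= D n.
  rewrite /D; apply: mulr_ge0; first lra.
  apply: divr_ge0; last by rewrite ler0n.
  apply: mulr_ge0; first by apply: mulr_ge0; [exact: sqr_ge0|exact: cn_ge0].
  by apply: exprn_ge0; rewrite !mulr_ge0//; lra.
set Ds := limn (series D).
set ea := fun s : R => expR (- ((zeta - 1) * s)).
have ea0 s : 0 <= ea s by rewrite expR_ge0.
have hB n s : 0 <= s -> `|term f p zeta n s| <= D n * ea s.
  by move=> s0; exact: term_bound.
have sD N : series D N <= Ds.
  apply: nondecreasing_cvgn_le cD N.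
  by apply: nondecreasing_series => n _ _; exact: D0.
have hS N s : 0 <= s -> `|series (fun n => term f p zeta n s) N| <= Ds * ea s.
  move=> s0; apply: (le_trans (ler_norm_sum _ _ _)).
  apply: (@le_trans _ _ (series D N * ea s)); last by apply: ler_wpM2r.
  rewrite /series /= mulr_suml; apply: ler_sum => n _; exact: hB.
have hcv s : 0 <= s -> cvgn (series (fun n => term f p zeta n s)).
  move=> s0; apply: normed_cvg.
  apply: (series_le_cvg _ _ _ (is_cvg_seriesZ (k:=ea s) cD)).
  - by move=> n /=.
  - by move=> n; rewrite scalrfctE mulr_ge0.
  - by move=> n; rewrite scalrfctE /= [_ *: _]mulrC; exact: hB.
split; first exact: hcv.
set L := fun s => limn (series (fun n => term f p zeta n s)).
pose F_ := fun N s => (series (fun n => term f p zeta n s) N)%:E.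
pose Fl := fun s => (L s)%:E.
pose G := fun s => ((Ds)%:E * (ea s)%:E)%E.
have hD s : halfline R s -> 0 <= s by rewrite /halfline /= in_itv /= andbT.
have mS N : measurable_fun (halfline R) (fun s => series (fun n => term f p zeta n s) N).
  by rewrite /series /=; apply: measurable_sum => n; exact: term_meas.
have mF_ N : measurable_fun (halfline R) (F_ N) by apply/measurable_EFinP; exact: mS.
have mFl : measurable_fun (halfline R) Fl.
  apply/measurable_EFinP.
  apply: (measurable_fun_cvg (h := fun N s => series (fun n => term f p zeta n s) N)).
    exact: mS.
  by move=> s hs; exact: (hcv s (hD s hs)).
have fF : {ae (@lebesgue_measure R), forall x, halfline R x -> F_ ^~ x @ \oo --> Fl x}.
  apply: aeW => s hs; rewrite /F_ /Fl; apply: cvg_EFin; first exact: nearW.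
  exact: (hcv s (hD s hs)).
have iE : (@lebesgue_measure R).-integrable (halfline R) (fun s => (ea s)%:E).
  exact: exp_integrable.
have iG : (@lebesgue_measure R).-integrable (halfline R) G.
  by apply: integrableZl; first exact: measurable_itv.
have fG : {ae (@lebesgue_measure R), forall x n, halfline R x -> (`|F_ n x| <= G x)%E}.
  apply: aeW => s n hs; rewrite /F_ /G abse_EFin -EFinM lee_fin; exact: hS (hD s hs).
have [iL _ cI] := @dominated_convergence _ _ R (@lebesgue_measure R) (halfline R)
  ltac:(exact: measurable_itv) F_ Fl G ltac:(exact: mF_) ltac:(exact: mFl)
  ltac:(exact: fF) ltac:(exact: iG) ltac:(exact: fG).
have iT n : (@lebesgue_measure R).-integrable (halfline R) (fun s => (term f p zeta n s)%:E).
  apply: (@le_integrable _ _ R (@lebesgue_measure R) (halfline R) ltac:(exact: measurable_itv)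
     _ (fun s => (D n)%:E * (ea s)%:E)%E).
  - by apply/measurable_EFinP; exact: term_meas.
  - move=> s hs; rewrite abse_EFin -EFinM abse_EFin lee_fin (ger0_norm (mulr_ge0 (D0 n) (ea0 s))).
    exact: hB (hD s hs).
  - by apply: integrableZl; first exact: measurable_itv.
split; first exact: iL.
split; first exact: iT.
have eI N : (\int[@lebesgue_measure R]_(x in halfline R) F_ N x)%E =
    (series (fun n => Rintegral (@lebesgue_measure R) (halfline R) (term f p zeta n)) N)%:E.
  rewrite /F_ /series /=.
  under eq_integral do rewrite -sumEFin.
  rewrite integral_sum; [|exact: measurable_itv|exact: iT].
  rewrite -sumEFin; apply: eq_bigr => n _.
  by rewrite /Rintegral fineK//; apply: integrable_fin_num => //; exact: measurable_itv.
have eL : (\int[@lebesgue_measure R]_(x in halfline R) Fl x)%E =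
    (Rintegral (@lebesgue_measure R) (halfline R) L)%:E.
  by rewrite /Rintegral fineK//; apply: integrable_fin_num => //; exact: measurable_itv.
move: cI; rewrite eL.
rewrite (_ : [sequence _]_n = fun N => (series (fun n =>
   Rintegral (@lebesgue_measure R) (halfline R) (term f p zeta n)) N)%:E); last first.
  by apply/funext => N; rewrite /= eI.
by move/fine_cvg.
Qed.
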